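(* Let $G$ be an almost hypohamiltonian graph containing a triangle $T$. Then every vertex of $T$ has degree at least $4$ in $G$.
   Context: All graphs are finite, undirected, connected, without loops or multiple edges. A graph is hamiltonian if it has a cycle through all its vertices. A non-hamiltonian graph $G$ is almost hypohamiltonian if there exists a vertex $w$ (the exceptional vertex) such that $G - w$ is non-hamiltonian and $G - v$ is hamiltonian for every vertex $v \neq w$. *)

(* Defs.v *)
From mathcomp Require Import all_boot.
Set Implicit Arguments. Unset Strict Implicit. Unset Printing Implicit Defensive.

Section Graphs.
Variable T : finType.

Definition simple_graph (e : rel T) : Prop := symmetric e /\ irreflexive e.

Definition connected_graph (e : rel T) : Prop := forall x y : T, connect e x y.

(* c is a hamiltonian cycle of the subgraph of e induced by vertex set S:
   c lists every vertex of S exactly once, at least 3 vertices,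
   and consecutive vertices (cyclically) are adjacent. *)
Definition ham_cycle_in (e : rel T) (S : {set T}) (c : seq T) : Prop :=
  [/\ uniq c, (forall x, (x \in c) = (x \in S)), 3 <= size c & cycle e c].

Definition hamiltonian_on (e : rel T) (S : {set T}) : Prop :=
  exists c, ham_cycle_in e S c.

Definition hamiltonian (e : rel T) : Prop := hamiltonian_on e [set: T].

Definition hamiltonian_minus (e : rel T) (v : T) : Prop :=
  hamiltonian_on e [set~ v].

Definition almost_hypohamiltonian (e : rel T) : Prop :=
  simple_graph e /\ connected_graph e /\ ~ hamiltonian e /\
  exists w : T, ~ hamiltonian_minus e w /\
                forall v : T, v != w -> hamiltonian_minus e v.

Definition degree (e : rel T) (x : T) : nat := #|[set y | e x y]|.

Definition triangle (e : rel T) (a b c : T) : Prop := [&& e a b, e b c & e a c].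

End Graphs.

(* Main.v *)
Require Import Defs.
From mathcomp Require Import all_boot.

Lemma key (T : finType) (e : rel T) (a x y : T) :
  simple_graph e -> ~ hamiltonian e -> hamiltonian_minus e x ->
  e a x -> e a y -> e x y -> 4 <= degree e a.
Proof.
move=> [sym irr] nH [c0 [uc0 mc0 sc0 cc0]] eax eay exy.
have ax : a != x by apply/eqP=> E; move: eax; rewrite E irr.
have xy : x != y by apply/eqP=> E; move: exy; rewrite E irr.
have ac0 : a \in c0 by rewrite mc0 !inE.
have xc0 : x \notin c0 by rewrite mc0 !inE eqxx.
case: (rot_to ac0) => i s Hr.
have uc : uniq (a :: s) by rewrite -Hr rot_uniq.
have mc : forall z, (z \in a :: s) = (z \in c0) by move=> z; rewrite -Hr mem_rot.
have sc : 3 <= size (a :: s) by rewrite -Hr size_rot.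
have cc : cycle e (a :: s) by rewrite -Hr rot_cycle.
clear Hr; case: s uc mc sc cc => [|u s2] //; case/lastP: s2 => [|s3 v] //.
move=> uc mc _ cc.
have xu : u != x by apply/eqP=> E; move: xc0; rewrite -mc E !inE eqxx !orbT.
have xv : v != x by apply/eqP=> E; move: xc0; rewrite -mc E !(inE, mem_rcons) eqxx !orbT.
have uv : u != v.
  apply/eqP=> E; move: uc; rewrite /= E !(inE, mem_rcons) eqxx /=. by rewrite andbF.
move: (cc); rewrite /cycle /= rcons_path last_rcons; case/and3P=> eau pu eva.
case: (leqP 4 (degree e a)) => // Hdeg; exfalso.
have xn : x \notin [:: a, u & rcons s3 v] by rewrite mc.
have mall : forall z, z != x -> z \in [:: a, u & rcons s3 v].
  by move=> z zx; rewrite mc mc0 !inE zx.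
case: (eqVneq u y) => [Euy | uy].
  apply: nH; exists [:: a, x, u & rcons s3 v]; split.
  - rewrite (cons_uniq a) (cons_uniq x) !in_cons negb_or; move: xn uc; rewrite in_cons negb_or cons_uniq => /andP [xa ->] /andP [-> ->].
    by rewrite eq_sym xa.
  - move=> z; rewrite in_setT; case: (eqVneq z x) => [->|zx]; first by rewrite !inE eqxx orbT.
    by move: (mall z zx); rewrite !in_cons (negPf zx).
  - by [].
  - by rewrite /cycle /= rcons_path last_rcons eax pu eva Euy exy.
case: (eqVneq v y) => [Evy | vy].
  apply: nH; exists (rcons [:: a, u & rcons s3 v] x); split.
  - by rewrite rcons_uniq xn uc.
  - move=> z; rewrite in_setT mem_rcons in_cons; case: (eqVneq z x) => //= zx.
    by rewrite mall.
  - by rewrite size_rcons.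
  - change (cycle e [:: a, u & rcons (rcons s3 v) x]).
    rewrite /cycle /= rcons_path last_rcons eau.
    by rewrite rcons_path pu last_rcons Evy sym exy sym eax.
have : size [:: x; y; u; v] <= size (enum [set z | e a z]).
  apply: uniq_leq_size.
    by rewrite /= !inE !negb_or xy eq_sym xu eq_sym xv eq_sym uy eq_sym vy uv.
  move=> z; rewrite mem_enum inE !inE => /or4P [] /eqP ->.
  - exact: eax.
  - exact: eay.
  - exact: eau.
  - by rewrite sym.
by rewrite -cardE => H; move: Hdeg; rewrite /degree ltnNge H.
Qed.

Theorem lemma3p5 (T : finType) (e : rel T) (a b c : T) :
  almost_hypohamiltonian e -> triangle e a b c ->
  [/\ 4 <= degree e a, 4 <= degree e b & 4 <= degree e c].
Proof.
move=> [[sym irr] [_ [nH [w [_ Hw]]]]] /and3P [eab ebc eac].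
have sg : simple_graph e by [].
have bc : b != c by apply/eqP=> E; move: ebc; rewrite E irr.
have ab : a != b by apply/eqP=> E; move: eab; rewrite E irr.
have ac : a != c by apply/eqP=> E; move: eac; rewrite E irr.
have gen : forall p q r, e p q -> e p r -> e q r -> p != q -> p != r -> q != r ->
   4 <= degree e p.
  move=> p q r epq epr eqr pq pr qr.
  case: (eqVneq q w) => [Eq|qw].
    have rw : r != w by rewrite -Eq eq_sym.
    by apply: (@key _ e p r q) => //; [exact: Hw | rewrite sym].
  by apply: (@key _ e p q r) => //; exact: Hw.
split.
- exact: (gen a b c).
- by apply: (gen b a c) => //; [rewrite sym | rewrite eq_sym].
- by apply: (gen c a b) => //; [rewrite sym | rewrite sym | rewrite eq_sym | rewrite eq_sym].
Qed.
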